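(* Let $\Sigma$ be an alphabet with $|\Sigma|\ge 3$ and $f\colon\Sigma^*\to\Sigma^*$ RCP. Then exactly one of the following holds: ($C_1$) there exists $b\in\Sigma$ such that $f(x)\in b\Sigma^*$ for all $x\in\Sigma^*$; ($C_2$) $f(x)\in x\Sigma^*$ for all $x\in\Sigma^*$; ($C_3$) $f(x)=\varepsilon$ for all $x\in\Sigma^*$.
   Context: $\Sigma^*$ is the free monoid over $\Sigma$ (finite words, concatenation, empty word $\varepsilon$). For a word $w$, $w\Sigma^*$ denotes the set of words having $w$ as a prefix. A function $f\colon(\Sigma^* )^k\to\Sigma^*$ is RCP if for every monoid morphism $\varphi\colon\Sigma^*\to\Sigma^*$ and all $u_1,\ldots,u_k,v_1,\ldots,v_k$ with $\varphi(u_i)=\varphi(v_i)$ for all $i$, we have $\varphi(f(u_1,\ldots,u_k))=\varphi(f(v_1,\ldots,v_k))$. *)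

(* Defs.v *)
From mathcomp Require Import all_boot.
Set Implicit Arguments. Unset Strict Implicit. Unset Printing Implicit Defensive.

Definition is_monoid_morphism (T : Type) (phi : seq T -> seq T) : Prop :=
  phi [::] = [::] /\ forall u v : seq T, phi (u ++ v) = phi u ++ phi v.

Definition RCP1 (T : Type) (f : seq T -> seq T) : Prop :=
  forall phi : seq T -> seq T, is_monoid_morphism phi ->
  forall u v : seq T, phi u = phi v -> phi (f u) = phi (f v).

Definition has_prefix (T : Type) (p w : seq T) : Prop :=
  exists r : seq T, w = p ++ r.

Definition exactly_one3 (P Q R : Prop) : Prop :=
  [/\ P, ~ Q & ~ R] \/ [/\ ~ P, Q & ~ R] \/ [/\ ~ P, ~ Q & R].

(* Main.v *)
Require Import Defs.
From mathcomp Require Import all_boot.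
Set Implicit Arguments. Unset Strict Implicit. Unset Printing Implicit Defensive.

Definition tsub (T : Type) (t : seq (option T)) (w : seq T) : seq T :=
  flatten (map (fun o => match o with Some a => [:: a] | None => w end) t).

Lemma tsub_morph (T : Type) (phi : seq T -> seq T) t w :
  is_monoid_morphism phi ->
  phi (tsub t w) =
  flatten (map (fun o => match o with Some a => phi [:: a] | None => phi w end) t).
Proof.
move=> [h0 hc]; elim: t => [|o t IH] //=.
rewrite /tsub /= hc; congr (_ ++ _); first by case: o.
exact: IH.
Qed.

Lemma transfer (T : Type) (f : seq T -> seq T) t phi v w :
  RCP1 f -> is_monoid_morphism phi -> f v = tsub t v -> phi v = phi w ->
  phi (f w) = phi (tsub t w).
Proof.
move=> Hf Hphi Hv E.
rewrite -(Hf phi Hphi v w E) Hv !tsub_morph //.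
by congr flatten; apply: eq_map => -[a|] //; rewrite E.
Qed.

Lemma map_morph (T : Type) (r : T -> T) : is_monoid_morphism (map r).
Proof. by split => // u v; rewrite map_cat. Qed.
Lemma filter_morph (T : Type) (p : pred T) : is_monoid_morphism (filter p).
Proof. by split => // u v; rewrite filter_cat. Qed.
Definition hom (T : Type) (g : T -> seq T) (w : seq T) := flatten (map g w).
Lemma hom_morph T g : is_monoid_morphism (@hom T g).
Proof. by split => // u v; rewrite /hom map_cat flatten_cat. Qed.

Lemma catI (T : Type) (s x y : seq T) : s ++ x = s ++ y -> x = y.
Proof. by elim: s => //= a s IH [] /IH. Qed.

Lemma exists_other (T : finType) (a b : T) : 3 <= #|T| -> exists c, (c != a) && (c != b).
Proof.
move=> H; case: (pickP (fun c => (c != a) && (c != b))) => [c Hc|H0]; first by exists c.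
have : #|T| <= #|[set a; b]|.
  apply: subset_leq_card; apply/subsetP => x _; rewrite !inE.
  by move: (H0 x) => /= /negbT; rewrite negb_and !negbK.
rewrite cards2 => h; have := leq_trans H h; by case: (a != b).
Qed.

Definition rn (T : eqType) (z y x : T) := if x == z then y else x.

Lemma rn_eq (T : eqType) (y z p q : T) : rn z y p = rn z y q ->
  p = q \/ (p = y /\ q = z) \/ (p = z /\ q = y).
Proof.
rewrite /rn; case: eqP => [->|hp]; case: eqP => [->|hq] //; auto.
Qed.

Lemma triple (T : eqType) (y z e p q s : T) : y != z -> y != e -> z != e ->
  rn z y p = rn z y q -> rn e y p = rn e y s -> rn e z q = rn e z s ->
  p = q \/ (p = y /\ q = z).
Proof.
move=> yz ye ze /rn_eq [->|[[-> ->]|[-> ->]]]; auto.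
move=> /rn_eq [H1|[[H1 H2]|[H1 H2]]] /rn_eq [H3|[[H3 H4]|[H3 H4]]]; subst;
  rewrite ?eqxx in yz ye ze *; try done.
Qed.

Lemma del3 (T : finType) (x y : seq T) : 3 <= #|T| ->
  (forall a, filter (predC1 a) x = filter (predC1 a) y) -> x = y.
Proof.
move=> HT; elim: x y => [|p x IH] [|q y] H //.
- have [a /andP[aq _]] := exists_other q q HT.
  by move: (H a) => /=; rewrite eq_sym aq.
- have [a /andP[ap _]] := exists_other p p HT.
  by move: (H a) => /=; rewrite eq_sym ap.
- case: (p =P q) => [E|npq].
    subst q; congr (_ :: _); apply: IH => a; move: (H a) => /=.
    by case: ifP => // _ [].
  have [a /andP[ap aq]] := exists_other p q HT.
  by move: (H a) => /=; rewrite eq_sym ap eq_sym aq => -[].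
Qed.

Definition gc (T : eqType) (a b c : T) (z : T) : seq T :=
  if z == c then [:: a; b] else [:: z].

Lemma sep_letter (T : finType) (a b p q : T) : 3 <= #|T| -> p != q ->
  (p == a) || (q == a) -> (p == b) || (q == b) ->
  (forall c, c != a -> c != b -> (if p == c then a else p) = (if q == c then a else q)) ->
  False.
Proof.
move=> HT npq Ha Hb H.
have [c1 /andP[c1a c1b]] := exists_other a b HT.
have [c2 /andP[c2a c2c1]] := exists_other a c1 HT.
case: (a =P b) => [eab|nab].
- rewrite -eab in Hb H c1b.
  have H1 := H c1 c1a c1a; have H2 := H c2 c2a c2a.
  case/orP: Ha => /eqP E.
  + rewrite E (eq_sym a c1) (eq_sym a c2) (negbTE c1a) (negbTE c2a) in H1 H2.
    move: H1 H2; case: eqP => [Eq1|_]; last by move=> E'; rewrite E E' eqxx in npq.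
    case: eqP => [Eq2|_]; last by move=> _ E'; rewrite E E' eqxx in npq.
    by move=> _ _; rewrite -Eq2 Eq1 eqxx in c2c1.
  + rewrite E (eq_sym a c1) (eq_sym a c2) (negbTE c1a) (negbTE c2a) in H1 H2.
    move: H1 H2; case: eqP => [Eq1|_]; last by move=> E'; rewrite E E' eqxx in npq.
    case: eqP => [Eq2|_]; last by move=> _ E'; rewrite E E' eqxx in npq.
    by move=> _ _; rewrite -Eq2 Eq1 eqxx in c2c1.
- have H1 := H c1 c1a c1b.
  case/orP: Ha => /eqP E; case/orP: Hb => /eqP E'.
  + by apply: nab; rewrite -E -E'.
  + rewrite E E' (eq_sym a c1) (eq_sym b c1) (negbTE c1a) (negbTE c1b) in H1.
    by apply: nab.
  + rewrite E E' (eq_sym a c1) (eq_sym b c1) (negbTE c1a) (negbTE c1b) in H1.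
    by apply: nab.
  + by apply: nab; rewrite -E -E'.
Qed.

Lemma sep (T : finType) (a b : T) (x y : seq T) : 3 <= #|T| ->
  filter (predC1 a) x = filter (predC1 a) y ->
  filter (predC1 b) x = filter (predC1 b) y ->
  (forall c, c != a -> c != b -> hom (gc a b c) x = hom (gc a b c) y) -> x = y.
Proof.
move=> HT; elim: x y => [|p x IH] [|q y] Ha Hb Hc //.
- have [c /andP[ca cb]] := exists_other a b HT.
  by move: (Hc c ca cb); rewrite /hom /= /gc; case: ifP.
- have [c /andP[ca cb]] := exists_other a b HT.
  by move: (Hc c ca cb); rewrite /hom /= /gc; case: ifP.
- case: (p =P q) => [E|npq].
    subst q; congr (_ :: _); apply: IH.
    + by move: Ha => /=; case: ifP => // _ [].
    + by move: Hb => /=; case: ifP => // _ [].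
    + by move=> c ca cb; move: (Hc c ca cb); rewrite /hom /= => /catI.
  exfalso; apply: (sep_letter HT (introN eqP npq)).
  + apply/negPn/negP; rewrite negb_or => /andP[pa qa].
    by move: Ha => /=; rewrite pa qa => -[] /npq.
  + apply/negPn/negP; rewrite negb_or => /andP[pb qb].
    by move: Hb => /=; rewrite pb qb => -[] /npq.
  + move=> c ca cb; move: (Hc c ca cb); rewrite /hom /= /gc.
    by case: ifP => _; case: ifP => _ //= [].
Qed.

Lemma size_filter_lt (T : eqType) (z : T) s : z \in s -> size (filter (predC1 z) s) < size s.
Proof.
elim: s => //= x s IH; rewrite in_cons; case: (x =P z) => [->|nx] /=.
  by rewrite eqxx /= ltnS size_filter count_size.
by case/orP => [/eqP E|/IH //]; case: nx.
Qed.

Lemma tsub1 (T : Type) (t : seq (option T)) y : tsub t [:: y] = map (fun o => odflt y o) t.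
Proof. by elim: t => //= o t IH; rewrite /tsub /= -/(tsub t [:: y]) IH; case: o. Qed.

Theorem mainTheorem10 (T : finType) (f : seq T -> seq T) :
  3 <= #|T| -> RCP1 f ->
  exactly_one3
    (exists b : T, forall x : seq T, has_prefix [:: b] (f x))
    (forall x : seq T, has_prefix x (f x))
    (forall x : seq T, f x = [::]).
Proof.
move=> HT Hf.
have : 0 < #|T| by apply: leq_trans HT.
case/card_gt0P => c0 _.
have [d0 /andP[d0c0 _]] := exists_other c0 c0 HT.
pose F y := f [:: y].
have Hren : forall y z, y != z -> map (rn z y) (F z) = map (rn z y) (F y).
  move=> y z yz; apply: (Hf _ (map_morph (rn z y))).
  by rewrite /= /rn eqxx (negbTE yz).
have Hsz : forall y, size (F y) = size (F c0).
  move=> y; case: (y =P c0) => [->//|/eqP yc].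
  by have := congr1 size (Hren y c0 yc); rewrite !size_map.
have Hpair : forall y z i, y != z ->
    nth c0 (F y) i = nth c0 (F z) i \/ (nth c0 (F y) i = y /\ nth c0 (F z) i = z).
  move=> y z i yz.
  case: (ltnP i (size (F c0))) => hi; last first.
    by left; rewrite !nth_default ?Hsz.
  have [e /andP[ey ez]] := exists_other y z HT.
  have R := fun a b (ab : a != b) => congr1 (fun s => nth (rn b a c0) s i) (Hren a b ab).
  have ye : y != e by rewrite eq_sym.
  have ze : z != e by rewrite eq_sym.
  have R1 := R y z yz; have R2 := R y e ye; have R3 := R z e ze.
  rewrite /= !(nth_map c0) ?Hsz // in R1 R2 R3.
  exact: (triple yz ye ze (esym R1) (esym R2) (esym R3)).
pose t := map (fun pq : T * T => if pq.1 == pq.2 then Some pq.1 else None)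
              (zip (F c0) (F d0)).
have Hsing : forall y, f [:: y] = tsub t [:: y].
  move=> y; rewrite tsub1.
  have szt : size t = size (F c0) by rewrite size_map size_zip (Hsz d0) minnn.
  apply: (@eq_from_nth _ c0); first by rewrite size_map szt Hsz.
  move=> i hi; rewrite (nth_map None) ?szt -?(Hsz y) //.
  rewrite (nth_map (c0, c0)) ?size_zip ?(Hsz d0) ?minnn -?(Hsz y) //.
  rewrite nth_zip ?(Hsz d0) //=.
  have c0d0 : c0 != d0 by rewrite eq_sym.
  have P1 := Hpair c0 d0 i c0d0.
  change (nth c0 (F y) i = odflt y (if nth c0 (F c0) i == nth c0 (F d0) i
     then Some (nth c0 (F c0) i) else None)).
  case: (y =P c0) => [->|/eqP yc].
    by case: P1 => [->|[-> ->]]; rewrite ?eqxx // (negbTE c0d0).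
  case: (y =P d0) => [->|/eqP yd].
    by case: P1 => [->|[-> ->]]; rewrite ?eqxx // (negbTE c0d0).
  have P2 := Hpair y c0 i yc; have P3 := Hpair y d0 i yd.
    case: P1 => [E|[E1 E2]].
      rewrite E eqxx /=.
      case: P2 => [->//|[Ey Ec]]; case: P3 => [->//|[Ey' Ed]].
      by move: d0c0; rewrite -Ed -E Ec eqxx.
    rewrite E1 E2 (negbTE c0d0) /=.
    case: P2 => [Ey|[->//]]; case: P3 => [Ey'|[->//]].
    by move: d0c0; rewrite -E2 -Ey' Ey E1 eqxx.
have Hall : forall w, f w = tsub t w.
  move=> w; have [n ltwn] := ubnP (size w); elim: n w ltwn => // n IH w ltwn.
  case: w ltwn => [|a [|b v]] ltwn.
  - apply: del3 => // a.
    by apply: (transfer Hf (filter_morph _) (Hsing a)); rewrite /= eqxx.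
  - exact: Hsing.
  - set w := [:: a, b & v] in ltwn *.
    apply: (sep (a:=a) (b:=b) HT).
    + apply: (transfer Hf (filter_morph (predC1 a)) (IH (filter (predC1 a) w) _)); last by rewrite filter_id.
      apply: (@leq_trans (size w)); last by rewrite -ltnS.
      by apply: size_filter_lt; rewrite inE eqxx.
    + apply: (transfer Hf (filter_morph (predC1 b)) (IH (filter (predC1 b) w) _)); last by rewrite filter_id.
      apply: (@leq_trans (size w)); last by rewrite -ltnS.
      by apply: size_filter_lt; rewrite !inE eqxx orbT.
    + move=> c ca cb.
      apply: (transfer Hf (hom_morph _) (IH (c :: v) _)); first by [].
      by rewrite /hom /= /gc eqxx eq_sym (negbTE ca) eq_sym (negbTE cb).
case Et : t Hall => [|[b|] t'] Hall.
- right; right; split.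
  + by move=> [b /(_ [::]) [r]]; rewrite Hall.
  + by move=> /(_ [:: c0]) [r]; rewrite Hall.
  + by move=> x; rewrite Hall.
- left; split.
  + by exists b => x; exists (tsub t' x); rewrite Hall.
  + have [c /andP[cb _]] := exists_other b b HT.
    move=> /(_ [:: c]) [r]; rewrite Hall /tsub /= => -[] E.
    by rewrite E eqxx in cb.
  + by move=> /(_ [::]); rewrite Hall.
- right; left; split.
  + move=> [b Hb]; have [c /andP[cb _]] := exists_other b b HT.
    move: (Hb [:: c]) => [r]; rewrite Hall /tsub /= => -[] E.
    by rewrite E eqxx in cb.
  + by move=> x; exists (tsub t' x); rewrite Hall.
  + by move=> /(_ [:: c0]); rewrite Hall.
Qed.
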